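(* Let $(G,\sigma)$ be a connection graph and $i,j\in V$ with $i\neq j$. Write $j^c=V\setminus\{j\}$ and partition the connection Laplacian as $\mathcal{L}=\begin{bmatrix}\mathcal{L}_{j}&\mathcal{L}_{j,j^c}\\ \mathcal{L}_{j^c,j}&\mathcal{L}_{j^c}\end{bmatrix}$ (reordering nodes so that $j$ comes first). Then $$\Omega^0_{ij}=-\big((\mathcal{L}_{j^c})^{-1}\mathcal{L}_{j^c,j}\big)(i),$$ where $(\cdot)(i)$ denotes the $d\times d$ block corresponding to node $i$.
   Context: A connection graph $(G,\sigma)$: finite connected weighted graph $G=(V,E,W)$, $V=\{1,\dots,n\}$, with $w_{ij}>0$ iff $\{i,j\}\in E$, $\deg(i)=\sum_j w_{ij}$, and $\sigma$ mapping oriented edges to $\mathsf{O}(d)$ with $\sigma_{ji}=\sigma_{ij}^{\mathrm T}$. The connection Laplacian $\mathcal{L}$ is the $nd\times nd$ block matrix with $d\times d$ blocks $\deg(i)I_d$ on the diagonal, $-w_{ij}\sigma_{ij}$ for $i\sim j$, $0$ otherwise. Simple random walk $(X_t)$ with transition probabilities $w_{ij}/\deg(i)$; $T^0_j=\inf\{t\ge0:X_t=j\}$; $\Omega^0_{ij}=\mathbb{E}\big[\prod_{\ell=1}^{T^0_j}\sigma_{X_{\ell-1}X_\ell}\mid X_0=i\big]$ (ordered product). *)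

(* Defs.v *)
From HB Require Import structures.
From mathcomp Require Import all_boot all_order all_algebra.
From mathcomp Require Import all_classical all_reals all_analysis.
Set Implicit Arguments. Unset Strict Implicit. Unset Printing Implicit Defensive.
Import Order.TTheory GRing.Theory Num.Theory.
Local Open Scope ring_scope.

Section ConnectionGraph.
Variables (R : realType) (N d : nat).
Variables (w : 'I_N -> 'I_N -> R) (sigma : 'I_N -> 'I_N -> 'M[R]_d).

Definition cdeg (i : 'I_N) : R := \sum_(k < N) w i k.

Definition trans (i k : 'I_N) : R := w i k / cdeg i.

(* encoding / decoding of the (node, coordinate) index of an (N*d)-vector *)
Definition enc (p : 'I_N * 'I_d) : 'I_(N * d) := mxvec_index p.1 p.2.
Definition dec (k : 'I_(N * d)) : 'I_N * 'I_d :=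
  enum_val (cast_ord (esym (mxvec_cast N d)) k).

Definition lap_block (i k : 'I_N) : 'M[R]_d :=
  if i == k then (cdeg i)%:M
  else if 0 < w i k then - (w i k *: sigma i k) else 0.

Definition conn_lap : 'M[R]_(N * d) :=
  \matrix_(p, q) lap_block (dec p).1 (dec q).1 (dec p).2 (dec q).2.

(* E[ prod_{l=1}^{T} sigma_{X_{l-1} X_l} ; path = (x0, s) ] restricted to the
   path: (prod of transition probabilities) times ordered product of sigma *)
Fixpoint path_weight (x : 'I_N) (s : seq 'I_N) : 'M[R]_d :=
  match s with
  | [::] => 1%:M
  | y :: s' => trans x y *: (sigma x y *m path_weight y s')
  end.

(* contribution of the event {T^0_j = T} to Omega^0_{ij}: sum over walk
   paths x_0 = i, x_1, ..., x_T = j with x_t <> j for t < T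
   (for T = 0 this gives 1 if i = j and 0 otherwise) *)
Definition omega_term (i j : 'I_N) (T : nat) : 'M[R]_d :=
  if T is T'.+1 then
    \sum_(p : T'.-tuple 'I_N | (i != j) && all (fun x => x != j) p)
       path_weight i (rcons p j)
  else (i == j)%:R%:M.
End ConnectionGraph.

Section Reduced.
Variables (R : realType) (n d : nat).
(* vertices 'I_n.+1 ; j^c is parametrized by lift j : 'I_n -> 'I_n.+1 *)
Variables (L : 'M[R]_(n.+1 * d)) (j : 'I_n.+1).

Definition lap_jc : 'M[R]_(n * d) :=
  \matrix_(p, q) L (enc (lift j (dec p).1, (dec p).2))
                   (enc (lift j (dec q).1, (dec q).2)).
Definition lap_jc_j : 'M[R]_(n * d, d) :=
  \matrix_(p, b) L (enc (lift j (dec p).1, (dec p).2)) (enc (j, b)).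

Definition block_at (X : 'M[R]_(n * d, d)) (i : 'I_n.+1) : 'M[R]_d :=
  match unlift j i with
  | Some u => \matrix_(a, b) X (enc (u, a)) b
  | None => 0
  end.
End Reduced.

(* Main.v *)
Require Import Defs.
From HB Require Import structures.
From mathcomp Require Import all_boot all_order all_algebra.
From mathcomp Require Import all_classical all_reals all_analysis.
Import Order.TTheory GRing.Theory Num.Theory.
Import numFieldNormedType.Exports.
Local Open Scope classical_set_scope.
Local Open Scope ring_scope.
From mathcomp Require Import ring lra.
Section CS.
Variable R : realType.

Lemma scalar_cs (I : finType) (P : pred I) (q c : I -> R) :
  (forall y, P y -> 0 <= q y) ->
  (\sum_(y | P y) q y * c y) ^+ 2 <=
    (\sum_(y | P y) q y) * \sum_(y | P y) q y * c y ^+ 2.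
Proof.
move=> q0.
set S := \sum_(y | P y) q y; set A := \sum_(y | P y) q y * c y;
set B := \sum_(y | P y) q y * c y ^+ 2.
have S0 : 0 <= S by apply: sumr_ge0.
have key : \sum_(y | P y) q y * (S * c y - A) ^+ 2 = S * (S * B - A ^+ 2).
  transitivity (\sum_(y | P y) (S ^+ 2 * (q y * c y ^+ 2) +
      ((- (2 * S * A)) * (q y * c y) + A ^+ 2 * q y))).
    by apply: eq_bigr => y _; ring.
  rewrite !big_split /= -!mulr_sumr -/A -/B -/S; ring.
have ge0 : 0 <= \sum_(y | P y) q y * (S * c y - A) ^+ 2.
  by apply: sumr_ge0 => y Py; rewrite mulr_ge0 ?q0 // sqr_ge0.
rewrite key in ge0.
have [Sgt0|] := ltrP 0 S.
  by rewrite -subr_ge0; move: ge0; rewrite pmulr_rge0.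
move=> Sle0; have S00 : S = 0 by apply/le_anti; rewrite Sle0 S0.
have qz := psumr_eq0P q0 S00.
have -> : A = 0 by rewrite /A big1 // => y Py; rewrite qz // mul0r.
by rewrite S00 expr0n /= mul0r.
Qed.
End CS.
Section Frob.
Variable R : realType.
Variables d m : nat.

Definition frob (h : 'M[R]_(d, m)) : R := \tr (h^T *m h).

Lemma frob_sq (h : 'M[R]_(d, m)) : frob h = \sum_(a < d) \sum_(b < m) h a b ^+ 2.
Proof.
rewrite /frob /mxtrace exchange_big /=; apply: eq_bigr => b _.
rewrite mxE; apply: eq_bigr => a _; by rewrite mxE expr2.
Qed.

Lemma frob_ge0 (h : 'M[R]_(d, m)) : 0 <= frob h.
Proof. by rewrite frob_sq; apply: sumr_ge0 => a _; apply: sumr_ge0 => b _; apply: sqr_ge0. Qed.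

Lemma frob_entry (h : 'M[R]_(d, m)) a b : h a b ^+ 2 <= frob h.
Proof.
rewrite frob_sq (bigD1 a) //= (bigD1 b) //= -addrA lerDl.
apply: addr_ge0; first by apply: sumr_ge0 => ? _; apply: sqr_ge0.
by apply: sumr_ge0 => ? _; apply: sumr_ge0 => ? _; apply: sqr_ge0.
Qed.

Lemma frob_orth (s : 'M[R]_d) (h : 'M[R]_(d, m)) : s^T *m s = 1%:M -> frob (s *m h) = frob h.
Proof. by move=> o; rewrite /frob trmx_mul !mulmxA -(mulmxA h^T) o mulmx1. Qed.

Lemma frob_jensen (I : finType) (P : pred I) (q : I -> R) (u : I -> 'M[R]_(d, m)) :
  (forall y, P y -> 0 <= q y) ->
  frob (\sum_(y | P y) q y *: u y) <=
    (\sum_(y | P y) q y) * \sum_(y | P y) q y * frob (u y).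
Proof.
move=> q0; rewrite frob_sq.
have E : forall a b, (\sum_(y | P y) q y *: u y) a b = \sum_(y | P y) q y * u y a b.
  by move=> a b; rewrite summxE; apply: eq_bigr => y _; rewrite mxE.
have -> : \sum_(a < d) \sum_(b < m) (\sum_(y | P y) q y *: u y) a b ^+ 2 =
   \sum_(a < d) \sum_(b < m) (\sum_(y | P y) q y * u y a b) ^+ 2.
  by apply: eq_bigr => a _; apply: eq_bigr => b _; rewrite E.
apply: (@le_trans _ _ (\sum_(a < d) \sum_(b < m)
   (\sum_(y | P y) q y) * \sum_(y | P y) q y * u y a b ^+ 2)).
  by apply: ler_sum => a _; apply: ler_sum => b _; apply: scalar_cs.
under eq_bigr => a _ do rewrite -mulr_sumr.
rewrite -mulr_sumr; apply: ler_wpM2l; first by apply: sumr_ge0.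
under eq_bigr => a _ do rewrite exchange_big /=.
rewrite exchange_big /=; apply: ler_sum => y _.
rewrite frob_sq mulr_sumr; apply: ler_sum => a _; rewrite mulr_sumr.
by apply: ler_sum => b _.
Qed.
End Frob.
Arguments frob {R d m}.
Arguments frob_sq {R d m}.
Arguments frob_ge0 {R d m}.
Arguments frob_entry {R d m}.
Arguments frob_orth {R d m}.
Arguments frob_jensen {R d m I P}.
Section SumCvg.
Variable R : realType.
Lemma cvg_sumR (I : Type) (r : seq I) (P : pred I) (f : I -> nat -> R) (l : I -> R) :
  (forall y, P y -> f y @ \oo --> l y) ->
  (fun K => \sum_(y <- r | P y) f y K) @ \oo --> \sum_(y <- r | P y) l y.
Proof.
move=> h; elim: r => [|y r IH].
  rewrite big_nil; under eq_fun do rewrite big_nil; exact: cvg_cst.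
rewrite big_cons; under eq_fun do rewrite big_cons.
case: ifPn => Py //; exact: cvgD (h _ Py) IH.
Qed.
End SumCvg.

Section Decay.
Variables (R : realType) (N d : nat) (w : 'I_N -> 'I_N -> R)
  (sigma : 'I_N -> 'I_N -> 'M[R]_d) (j : 'I_N).
Hypotheses (w_ge0 : forall x y, 0 <= w x y) (deg_gt0 : forall x, 0 < cdeg w x)
  (orth : forall x y, 0 < w x y -> (sigma x y)^T *m sigma x y = 1%:M)
  (conn : forall x, connect [rel x y | 0 < w x y] x j).

Local Notation p := (trans w).

Lemma p_ge0 x y : 0 <= p x y.
Proof. by rewrite /trans divr_ge0 // ltW. Qed.

Lemma p_sum1 x : \sum_y p x y = 1.
Proof. by rewrite /trans -mulr_suml -/(cdeg w x) divff // gt_eqF. Qed.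

Lemma p_gt0 x y : (0 < p x y) = (0 < w x y).
Proof. by rewrite /trans pmulr_lgt0 // invr_gt0. Qed.

Lemma p_split x : \sum_(y | y != j) p x y = 1 - p x j.
Proof. by rewrite -(p_sum1 x) [in RHS](bigD1 j) //= addrC addrK. Qed.

Lemma S_le1 x : \sum_(y | y != j) p x y <= 1.
Proof. by rewrite p_split lerBlDr lerDl p_ge0. Qed.

Fixpoint surv (K : nat) (x : 'I_N) : R :=
  if K is K'.+1 then \sum_(y | y != j) p x y * surv K' y else 1.

Lemma surv_ge0 K x : 0 <= surv K x.
Proof.
elim: K x => [|K IH] x /=; first exact: ler01.
by apply: sumr_ge0 => y _; rewrite mulr_ge0 ?p_ge0.
Qed.

Lemma surv_decr K x : surv K.+1 x <= surv K x.
Proof.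
elim: K x => [|K IH] x.
  rewrite /=; under eq_bigr do rewrite mulr1; exact: S_le1.
change (\sum_(y | y != j) p x y * surv K.+1 y <= \sum_(y | y != j) p x y * surv K y).
by apply: ler_sum => y _; rewrite ler_wpM2l ?p_ge0.
Qed.

Definition lsurv x := inf (range (fun K => surv K x)).

Lemma surv_lim x : (fun K => surv K x) @ \oo --> lsurv x.
Proof.
apply: nonincreasing_cvgn.
  by apply/nonincreasing_seqP => K; exact: surv_decr.
by exists 0 => _ [K _ <-]; exact: surv_ge0.
Qed.

Lemma lsurv_ge0 x : 0 <= lsurv x.
Proof.
apply: lb_le_inf; first by exists (surv 0 x), 0%N.
by move=> _ [K _ <-]; exact: surv_ge0.
Qed.

Lemma lsurv_eq x : lsurv x = \sum_(y | y != j) p x y * lsurv y.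
Proof.
have h1 := surv_lim x; rewrite -cvg_shiftS /= in h1.
have h2 : (fun K => surv K.+1 x) @ \oo --> \sum_(y | y != j) p x y * lsurv y.
  apply: cvg_sumR => y _; apply: cvgMl_tmp; exact: surv_lim.
exact: (cvg_unique _ h1 h2).
Qed.


Lemma connect_closed_pred (A : pred 'I_N) :
  (forall x y, A x -> 0 < w x y -> A y) ->
  forall x y, A x -> connect [rel x y | 0 < w x y] x y -> A y.
Proof.
move=> cl x y Ax /connectP [pth hp ->] {y}.
elim: pth x Ax hp => [|z pth IH] x Ax //= /andP [xz hp].
exact: IH (cl _ _ Ax xz) hp.
Qed.

Lemma lsurv0 x : x != j -> lsurv x = 0.
Proof.
move=> xj.
have [x0 x0j Hmax] : exists2 x0, x0 != j & forall z, z != j -> lsurv z <= lsurv x0.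
  case: (@arg_maxP _ _ 'I_N x (fun z => z != j) (lsurv) xj) => x0 H1 H2.
  by exists x0.
set m := lsurv x0.
suff m0 : m <= 0.
  by apply/le_anti; rewrite lsurv_ge0 andbT; apply: le_trans (Hmax _ xj) m0.
rewrite leNgt; apply/negP => mpos.
pose A := fun z => (z != j) && (lsurv z == m).
have cl : forall z y, A z -> 0 < w z y -> A y.
  move=> z y /andP [zj /eqP lz] wzy.
  have e1 : \sum_(y | y != j) p z y * (m - lsurv y) = - (m * p z j).
    rewrite (eq_bigr (fun y => m * p z y - p z y * lsurv y)); last first.
      by move=> ? _; rewrite mulrBr mulrC.
    rewrite sumrB -mulr_sumr p_split -lsurv_eq lz.
    ring.
  have ge0 : forall y, y != j -> 0 <= p z y * (m - lsurv y).
    by move=> y' y'j; rewrite mulr_ge0 ?p_ge0 // subr_ge0 Hmax.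
  have S0 : 0 <= \sum_(y | y != j) p z y * (m - lsurv y) by apply: sumr_ge0.
  have pj0 : p z j = 0.
    rewrite e1 oppr_ge0 pmulr_rle0 // in S0.
    by apply/le_anti; rewrite S0 p_ge0.
  have sum0 : \sum_(y | y != j) p z y * (m - lsurv y) = 0.
    by rewrite e1 pj0 mulr0 oppr0.
  have yj : y != j.
    apply/eqP => yj; move: wzy; rewrite yj -p_gt0 pj0 ltxx //.
  have := psumr_eq0P ge0 sum0 yj; move/eqP; rewrite mulf_eq0 => /orP [/eqP p0|].
    by move: wzy; rewrite -p_gt0 p0 ltxx.
  by rewrite subr_eq0 /A yj eq_sym.
have Aj : A j.
  by apply: (connect_closed_pred A cl x0 j); [rewrite /A x0j eqxx | apply: conn].
by move: Aj; rewrite /A eqxx.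
Qed.

Lemma decay (m : nat) (g : nat -> 'I_N -> 'M[R]_(d, m)) :
  (forall K x, x != j -> g K.+1 x = \sum_(y | y != j) p x y *: (sigma x y *m g K y)) ->
  forall x a b, x != j -> (fun K => g K x a b) @ \oo --> 0.
Proof.
move=> rec.
set C := \sum_x frob (g 0%N x).
have C0 : 0 <= C by apply: sumr_ge0 => ? _; exact: frob_ge0.
have bnd : forall K x, x != j -> frob (g K x) <= C * surv K x.
  elim => [|K IH] x xj.
    by rewrite /= mulr1 /C (bigD1 x) //= lerDl; apply: sumr_ge0 => ? _; exact: frob_ge0.
  rewrite rec //.
  apply: le_trans (frob_jensen _ _ _) _ => [y _|]; first exact: p_ge0.
  apply: le_trans (ler_piMl _ (S_le1 x)) _.
    by apply: sumr_ge0 => y _; rewrite mulr_ge0 ?p_ge0 ?frob_ge0.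
  rewrite [surv K.+1 x]/= mulr_sumr; apply: ler_sum => y yj.
  have -> : p x y * frob (sigma x y *m g K y) = p x y * frob (g K y).
    have [wpos|wle] := ltrP 0 (w x y); first by rewrite frob_orth // orth.
    have -> : p x y = 0.
      by apply/le_anti; rewrite p_ge0 andbT leNgt p_gt0 -leNgt.
    by rewrite !mul0r.
  rewrite mulrCA; apply: ler_wpM2l; first exact: p_ge0.
  exact: IH.
move=> x a b xj.
have hC : (fun K => C * surv K x) @ \oo --> 0.
  rewrite -(mulr0 C) -(lsurv0 x xj); apply: cvgMl_tmp; exact: surv_lim.
apply/cvgr0Pnorm_lt => eps eps0.
move/cvgr0Pnorm_lt: hC => /(_ (eps * eps) (mulr_gt0 eps0 eps0)).
apply: filterS => K hK.
have h2 : `|g K x a b| ^+ 2 < eps ^+ 2.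
  rewrite real_normK ?num_real //.
  apply: le_lt_trans (frob_entry _ a b) _.
  apply: le_lt_trans (bnd K x xj) _.
  apply: le_lt_trans (ler_norm _) _.
  by rewrite expr2.
by move: h2; rewrite ltr_sqr // nnegrE ?normr_ge0 ?ltW.
Qed.

End Decay.
Section Omega.
Variables (R : realType) (N d : nat) (w : 'I_N -> 'I_N -> R)
  (sigma : 'I_N -> 'I_N -> 'M[R]_d) (j : 'I_N).

Local Notation p := (trans w).
Local Notation om T x := (omega_term w sigma x j T).

Lemma tuple_cons_sum (I : finType) (V : nmodType) T (F : T.+1.-tuple I -> V) :
  \sum_(t : T.+1.-tuple I) F t = \sum_(y : I) \sum_(t : T.-tuple I) F [tuple of y :: t].
Proof.
rewrite (reindex (fun yt : I * T.-tuple I => [tuple of yt.1 :: yt.2])) /=; last first.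
  exists (fun t : T.+1.-tuple I => (thead t, [tuple of behead t])) => [[y t] _|t _].
    by congr pair; apply: val_inj.
  by rewrite -tuple_eta.
by rewrite pair_big /=; apply: eq_bigr => -[y t] _.
Qed.

Lemma om0 x : x != j -> om 0%N x = 0.
Proof. by move=> xj; rewrite /omega_term (negbTE xj) /= mulr0n raddf0. Qed.

Lemma om1 x : x != j -> om 1%N x = p x j *: sigma x j.
Proof.
move=> xj; rewrite /omega_term.
set t0 := [tuple] : 0.-tuple 'I_N.
have t0E : forall t : 0.-tuple 'I_N, t = t0 by move=> t; rewrite tuple0.
rewrite (bigD1 t0) /=; last by rewrite andbT.
rewrite big1 ?addr0; last by move=> t; rewrite (t0E t) eqxx andbF.
by rewrite /t0 /= mulmx1.
Qed.

Lemma omS x T : om T.+1 x =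
  \sum_(t : T.-tuple 'I_N | (x != j) && all (fun z => z != j) t)
     path_weight w sigma x (rcons t j).
Proof. by []. Qed.

Lemma omSS x T : x != j ->
  om T.+2 x = \sum_(y | y != j) p x y *: (sigma x y *m om T.+1 y).
Proof.
move=> xj; rewrite omS big_mkcond tuple_cons_sum [RHS]big_mkcond.
apply: eq_bigr => y _.
case: (eqVneq y j) => [->|yj].
  rewrite big1 // => t _.
  have -> : all (fun z => z != j) [tuple of j :: t] = false by rewrite /= eqxx.
  by rewrite andbF.
rewrite omS mulmx_sumr scaler_sumr [in RHS]/= [in RHS]big_mkcond; apply: eq_bigr => t _.
have -> : all (fun z => z != j) [tuple of y :: t] = all (fun z => z != j) t.
  by rewrite /= yj.
rewrite xj yj /=; case: (all _ _).
  by [].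
by [].
Qed.

Definition Wp (K : nat) (x : 'I_N) : 'M[R]_d := \sum_(0 <= T < K.+1) om T x.

Lemma WpS K x : x != j ->
  Wp K.+1 x = p x j *: sigma x j + \sum_(y | y != j) p x y *: (sigma x y *m Wp K y).
Proof.
move=> xj; rewrite /Wp big_nat_recl // om0 // add0r big_nat_recl // om1 //.
congr (_ + _).
rewrite (eq_bigr (fun y => \sum_(0 <= T < K) p x y *: (sigma x y *m om T.+1 y))); last first.
  by move=> y yj; rewrite big_nat_recl // om0 // add0r mulmx_sumr scaler_sumr.
rewrite exchange_big; apply: eq_bigr => T _; by rewrite omSS.
Qed.

Lemma Wp_diff K x : Wp K.+1 x = Wp K x + om K.+1 x.
Proof. by rewrite /Wp big_nat_recr. Qed.

End Omega.
Lemma dec_enc (N d : nat) (q : 'I_N * 'I_d) : dec (enc q) = q.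
Proof. by rewrite /dec /enc /mxvec_index cast_ordK enum_rankK -surjective_pairing. Qed.

Lemma enc_dec (N d : nat) (k : 'I_(N * d)) : enc (dec k) = k.
Proof. by rewrite /dec /enc /mxvec_index -surjective_pairing enum_valK cast_ordKV. Qed.

Lemma sum_enc (V : nmodType) (N d : nat) (F : 'I_(N * d) -> V) :
  \sum_k F k = \sum_(u < N) \sum_(c < d) F (enc (u, c)).
Proof.
rewrite (reindex (@enc N d)) /=; last by exists (@dec N d) => q _; rewrite ?dec_enc ?enc_dec.
by rewrite pair_big /=; apply: eq_bigr => -[u c] _.
Qed.

Lemma sum_lift (V : zmodType) (n : nat) (j : 'I_n.+1) (G : 'I_n.+1 -> V) :
  \sum_(y | y != j) G y = \sum_(u < n) G (lift j u).
Proof.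
have h1 : \sum_i G i = G j + \sum_(y | y != j) G y := bigD1 j (P := predT) (F := G) isT.
have h2 : \sum_i G i = G j + \sum_(u < n) G (lift j u) := bigD1_ord j (P := predT) (F := G) isT.
by apply: (@addrI _ (G j)); rewrite -h1 -h2.
Qed.

Section Mat.
Variables (R : realType) (n d : nat) (w : 'I_n.+1 -> 'I_n.+1 -> R)
  (sigma : 'I_n.+1 -> 'I_n.+1 -> 'M[R]_d) (j : 'I_n.+1).
Hypotheses (w_ge0 : forall x y, 0 <= w x y) (w_noloop : forall x, w x x = 0).

Local Notation L := (conn_lap w sigma).

Lemma conn_lapE x y a b : L (enc (x, a)) (enc (y, b)) = lap_block w sigma x y a b.
Proof. by rewrite mxE !dec_enc. Qed.

Lemma lap_blockE x y :
  lap_block w sigma x y = (x == y)%:R *: (cdeg w x)%:M - w x y *: sigma x y.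
Proof.
rewrite /lap_block; case: (eqVneq x y) => [->|xy].
  by rewrite w_noloop scale0r subr0 scale1r.
rewrite scale0r add0r; case: ifP => // /negbT; rewrite -leNgt => wle.
have -> : w x y = 0 by apply/le_anti; rewrite wle w_ge0.
by rewrite scale0r oppr0.
Qed.

Definition Vbig (m : nat) (f : 'I_n.+1 -> 'M[R]_(d, m)) : 'M[R]_(n * d, m) :=
  \matrix_(k, b) f (lift j (dec k).1) (dec k).2 b.

Lemma M_Vbig (m : nat) (f : 'I_n.+1 -> 'M[R]_(d, m)) u a b :
  (lap_jc L j *m Vbig m f) (enc (u, a)) b =
  (cdeg w (lift j u) *: f (lift j u)
     - \sum_(y | y != j) w (lift j u) y *: (sigma (lift j u) y *m f y)) a b.
Proof.
set x := lift j u.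
have xj : x != j by rewrite eq_sym neq_lift.
rewrite mxE sum_enc.
transitivity ((\sum_(y | y != j) lap_block w sigma x y *m f y) a b).
  rewrite sum_lift summxE; apply: eq_bigr => v _.
  rewrite mxE; apply: eq_bigr => c _.
  by rewrite !mxE !dec_enc.
congr (fun_of_matrix _ a b).
under eq_bigr do rewrite lap_blockE mulmxBl -!scalemxAl.
rewrite sumrB (bigD1 x) //= eqxx scale1r mul_scalar_mx big1 ?addr0 //.
by move=> y /andP [_ yx]; rewrite eq_sym (negbTE yx) scale0r.
Qed.

Lemma B_entry u a b :
  lap_jc_j L j (enc (u, a)) b = (- (w (lift j u) j *: sigma (lift j u) j)) a b.
Proof.
rewrite mxE dec_enc conn_lapE lap_blockE /=.
by rewrite eq_sym (negbTE (neq_lift j u)) scale0r add0r.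
Qed.

Lemma block_atE (X : 'M[R]_(n * d, d)) u a b : block_at j X (lift j u) a b = X (enc (u, a)) b.
Proof. by rewrite /block_at liftK mxE. Qed.

Lemma Vbig_entry (m : nat) (f : 'I_n.+1 -> 'M[R]_(d, m)) u a b :
  Vbig m f (enc (u, a)) b = f (lift j u) a b.
Proof. by rewrite mxE dec_enc. Qed.

End Mat.
Lemma entryN (R : realType) m1 m2 (A : 'M[R]_(m1, m2)) r c : (- A) r c = - A r c.
Proof. by rewrite mxE. Qed.
Lemma entryB (R : realType) m1 m2 (A B : 'M[R]_(m1, m2)) r c : (A - B) r c = A r c - B r c.
Proof. by rewrite !mxE. Qed.
Lemma entryM (R : realType) m1 m2 m3 (A : 'M[R]_(m1, m2)) (B : 'M[R]_(m2, m3)) r c :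
  (A *m B) r c = \sum_k A r k * B k c.
Proof. by rewrite mxE. Qed.
Section Main.
Variables (R : realType) (n d : nat)
  (w : 'I_n.+1 -> 'I_n.+1 -> R) (sigma : 'I_n.+1 -> 'I_n.+1 -> 'M[R]_d).
Hypotheses (w_ge0 : forall i k, 0 <= w i k)
  (w_noloop : forall i, w i i = 0)
  (G_connected : forall i k, connect [rel x y | 0 < w x y] i k)
  (sigma_orth : forall i k, 0 < w i k -> sigma i k *m (sigma i k)^T = 1%:M).
Variables (i j : 'I_n.+1).
Hypothesis (hij : i != j).

Local Notation L := (conn_lap w sigma).
Local Notation M := (lap_jc L j).
Local Notation B := (lap_jc_j L j).

Lemma deg_gt0 x : 0 < cdeg w x.
Proof.
pose k := if x == j then i else j.
have xk : x != k.
  rewrite /k; case: (eqVneq x j) => [->|//]; by rewrite eq_sym.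
have := G_connected x k; case/connectP => -[|y pth] /= hp kE.
  by rewrite kE eqxx in xk.
move/andP: hp => [wxy _].
apply: lt_le_trans wxy _.
rewrite /cdeg (bigD1 y) //= lerDl; exact: sumr_ge0.
Qed.

Lemma orth' x y : 0 < w x y -> (sigma x y)^T *m sigma x y = 1%:M.
Proof. by move=> h; apply: mulmx1C; apply: sigma_orth. Qed.

Lemma conn' x : connect [rel x y | 0 < w x y] x j.
Proof. exact: G_connected. Qed.

Lemma degp x y : cdeg w x * trans w x y = w x y.
Proof. by rewrite /trans mulrC divfK // gt_eqF // deg_gt0. Qed.

Lemma unitM : M \in unitmx.
Proof.
rewrite -unitmx_tr -row_free_unit; apply: inj_row_free => v hv.
have Mu : M *m v^T = 0 by rewrite -{1}[M]trmxK -trmx_mul hv trmx0.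
pose h (x : 'I_n.+1) : 'M[R]_(d, 1) :=
  if unlift j x is Some u then \matrix_(a, b) v^T (enc (u, a)) b else 0.
have Vh : Vbig R n d j 1 h = v^T.
  by apply/matrixP => k b; rewrite mxE /h liftK mxE -surjective_pairing enc_dec.
have rec : forall x, x != j -> h x = \sum_(y | y != j) trans w x y *: (sigma x y *m h y).
  move=> x xj; have jx : j != x by rewrite eq_sym.
  have [u xE _] := unlift_some jx.
  have E : cdeg w x *: h x - \sum_(y | y != j) w x y *: (sigma x y *m h y) = 0.
    rewrite xE; apply/matrixP => a b.
    by rewrite -(M_Vbig _ _ _ w sigma j w_ge0 w_noloop) Vh Mu !mxE.
  move/eqP: E; rewrite subr_eq0 => /eqP E.
  have dn0 : cdeg w x != 0 by rewrite gt_eqF // deg_gt0.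
  rewrite -[h x]scale1r -(mulVf dn0) -scalerA E scaler_sumr.
  by apply: eq_bigr => y _; rewrite scalerA /trans mulrC.
have hz : forall x a b, x != j -> h x a b = 0.
  move=> x a b xj.
  have hc := @decay _ _ _ w sigma j w_ge0 deg_gt0 orth' conn' 1 (fun _ => h)
    (fun _ => rec) x a b xj.
  exact: (cvg_unique _ (cvg_cst (h x a b)) hc).
apply/matrixP => r c.
have : v^T c r = 0 by rewrite -Vh mxE hz // eq_sym neq_lift.
by rewrite !mxE.
Qed.

Local Notation Wb K := (Vbig R n d j d (Wp R n.+1 d w sigma j K)).

Lemma E_entry K u a b :
  (M *m Wb K + B) (enc (u, a)) b =
  - (cdeg w (lift j u) * omega_term w sigma (lift j u) j K.+1 a b).
Proof.
set x := lift j u.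
have xj : x != j by rewrite eq_sym neq_lift.
have e1 : cdeg w x *: Wp R n.+1 d w sigma j K.+1 x =
    w x j *: sigma x j + \sum_(y | y != j) w x y *: (sigma x y *m Wp R n.+1 d w sigma j K y).
  rewrite WpS // scalerDr scalerA degp scaler_sumr; congr (_ + _).
  by apply: eq_bigr => y _; rewrite scalerA degp.
have e2 : omega_term w sigma x j K.+1 =
    Wp R n.+1 d w sigma j K.+1 x - Wp R n.+1 d w sigma j K x.
  by rewrite Wp_diff addrC addKr.
have Q : cdeg w x *: Wp R n.+1 d w sigma j K x
    - \sum_(y | y != j) w x y *: (sigma x y *m Wp R n.+1 d w sigma j K y)
    + - (w x j *: sigma x j) = - (cdeg w x *: omega_term w sigma x j K.+1).
  by rewrite e2 scalerBr e1 opprB opprD addrA [LHS]addrAC.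
rewrite [LHS]mxE (M_Vbig _ _ _ w sigma j w_ge0 w_noloop) (B_entry _ _ _ w sigma j w_ge0 w_noloop).
have -> : - (cdeg w x * omega_term w sigma x j K.+1 a b) =
   (- (cdeg w x *: omega_term w sigma x j K.+1)) a b by rewrite !mxE.
by rewrite -Q !mxE /x.
Qed.
Lemma main_cvg a b :
  (fun K : nat => \sum_(T < K) omega_term w sigma i j T a b) @ \oo -->
    (- block_at j (invmx M *m B) i) a b.
Proof.
have jx : j != i by rewrite eq_sym.
have [u iE _] := unlift_some jx.
have Ecvg : forall k b', (fun K => (M *m Wb K + B) k b') @ \oo --> 0.
  move=> k b'; rewrite -[k]enc_dec; case: (dec k) => u' a'.
  under eq_fun => K do rewrite E_entry.
  rewrite -oppr0 -(mulr0 (cdeg w (lift j u'))); apply: cvgN; apply: cvgMl_tmp.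
  apply: (@decay _ _ _ w sigma j w_ge0 deg_gt0 orth' conn' d
            (fun K x => omega_term w sigma x j K.+1)).
    by move=> K x xj; rewrite omSS.
  by rewrite eq_sym neq_lift.
have WE : forall K, Wb K = invmx M *m ((M *m Wb K + B) - B).
  by move=> K; rewrite addrK mulKmx // unitM.
have Wcvg : (fun K => Wb K (enc (u, a)) b) @ \oo --> (- (invmx M *m B)) (enc (u, a)) b.
  under eq_fun => K do rewrite WE entryM.
  have -> : (- (invmx M *m B)) (enc (u, a)) b =
      \sum_k invmx M (enc (u, a)) k * (0 - B k b).
    rewrite entryN entryM -sumrN; apply: eq_bigr => k _; by rewrite sub0r mulrN.
  apply: cvg_sumR => k _; apply: cvgMl_tmp.
  under eq_fun => K do rewrite entryB.
  apply: cvgB; [exact: Ecvg | exact: cvg_cst].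
have -> : (- block_at j (invmx M *m B) i) a b = (- (invmx M *m B)) (enc (u, a)) b.
  by rewrite iE !entryN block_atE.
rewrite -cvg_shiftS.
have eqs : (fun K => Wb K (enc (u, a)) b) =
    [sequence \sum_(T < K.+1) omega_term w sigma i j T a b]_K.
  apply/funext => K /=.
  by rewrite (Vbig_entry R n d j) -iE /Wp big_mkord summxE.
by rewrite -eqs.
Qed.

End Main.

Theorem proposition4p9 (R : realType) (n d : nat)
  (w : 'I_n.+1 -> 'I_n.+1 -> R) (sigma : 'I_n.+1 -> 'I_n.+1 -> 'M[R]_d)
  (w_ge0 : forall i k, 0 <= w i k)
  (w_sym : forall i k, w i k = w k i)
  (w_noloop : forall i, w i i = 0)
  (G_connected : forall i k, connect [rel x y | 0 < w x y] i k)
  (sigma_orth : forall i k, 0 < w i k -> sigma i k *m (sigma i k)^T = 1%:M)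
  (sigma_sym : forall i k, 0 < w i k -> sigma k i = (sigma i k)^T)
  (i j : 'I_n.+1) (hij : i != j) :
  let L := conn_lap w sigma in
  let X := - block_at j (invmx (lap_jc L j) *m lap_jc_j L j) i in
  forall a b : 'I_d,
    (fun K : nat => \sum_(T < K) omega_term w sigma i j T a b) @ \oo --> X a b.
Proof.
move=> L X a b.
exact: (@main_cvg R n d w sigma w_ge0 w_noloop G_connected sigma_orth i j hij a b).
Qed.
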